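(* Let $A=\{2,3,5,7,11,\dots\}$ be the set of all prime numbers. For every positive integer $n$, $$\sum_{k=1}^{n}N^p_A(k)\big(q^e_A(n-k)-q^o_A(n-k)\big)=\Omega(n),$$ where $\Omega(n)$ denotes the number of distinct prime divisors of $n$.
   Context: For a set $A$ of positive integers, $N^p_A(n)$ is the total number of parts, summed over all partitions of $n$ with parts in $A$. $q^e_A(m)$ (resp. $q^o_A(m)$) is the number of partitions of $m$ into pairwise distinct parts from $A$ with an even (resp. odd) number of parts; $q^e_A(0)=1$, $q^o_A(0)=0$. *)

(* Defs.v *)
From mathcomp Require Import all_boot all_order all_algebra.
Set Implicit Arguments. Unset Strict Implicit. Unset Printing Implicit Defensive.

(* A partition of n with parts in A is encoded by its multiplicity function
   m : 'I_n.+1 -> 'I_n.+1 (m i = number of parts equal to i); parts can only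
   be in 1..n and multiplicities are <= n, so this is a bijective encoding
   (A is a set of positive integers, so A 0 is false and m 0 = 0). *)
Definition is_partA (A : pred nat) (n : nat) (m : {ffun 'I_n.+1 -> 'I_n.+1}) : bool :=
  [forall i, (m i != 0 :> nat) ==> A i] && (\sum_(i < n.+1) i * m i == n).

Definition NpA (A : pred nat) (n : nat) : nat :=
  \sum_(m : {ffun 'I_n.+1 -> 'I_n.+1} | is_partA A m) \sum_(i < n.+1) (m i : nat).

(* Partitions of m into pairwise distinct parts from A = subsets S of {0..m}
   with all elements in A and element sum m. *)
Definition is_dpartA (A : pred nat) (m : nat) (S : {set 'I_m.+1}) : bool :=
  [forall i in S, A i] && (\sum_(i in S) (i : nat) == m).

Definition qeA (A : pred nat) (m : nat) : nat :=
  #|[set S : {set 'I_m.+1} | is_dpartA A S && ~~ odd #|S|]|.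

Definition qoA (A : pred nat) (m : nat) : nat :=
  #|[set S : {set 'I_m.+1} | is_dpartA A S && odd #|S|]|.

(* Main.v *)
Require Import Defs.
From mathcomp Require Import all_boot all_order all_algebra.
From mathcomp Require Import ring zify.
Import GRing.Theory Num.Theory.
Local Open Scope ring_scope.
Set Implicit Arguments. Unset Strict Implicit. Unset Printing Implicit Defensive.

Definition eqk (k : nat) (p q : {poly int}) := forall j, (j <= k)%N -> p`_j = q`_j.

Lemma eqk_refl k p : eqk k p p. Proof. by []. Qed.
Lemma eqk_sym k p q : eqk k p q -> eqk k q p.
Proof. by move=> h j hj; rewrite h. Qed.
Lemma eqk_trans k p q r : eqk k p q -> eqk k q r -> eqk k p r.
Proof. by move=> h1 h2 j hj; rewrite h1 // h2. Qed.
Lemma eqkD k p q p' q' : eqk k p p' -> eqk k q q' -> eqk k (p + q) (p' + q').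
Proof. by move=> h1 h2 j hj; rewrite !coefD h1 // h2. Qed.
Lemma eqkM k p q p' q' : eqk k p p' -> eqk k q q' -> eqk k (p * q) (p' * q').
Proof.
move=> h1 h2 j hj; rewrite !coefM; apply: eq_bigr => -[i hi] _ /=.
rewrite h1 ?h2 //; [lia | lia].
Qed.
Lemma eqk_sum k (I : finType) (P : pred I) (F G : I -> {poly int}) :
  (forall i, P i -> eqk k (F i) (G i)) -> eqk k (\sum_(i | P i) F i) (\sum_(i | P i) G i).
Proof. move=> h; apply: (big_ind2 (eqk k)) => //; first [move=> ? ? ? ? ? ?; exact: eqkD] ; exact: h. Qed.
Lemma eqk_prod k (I : finType) (P : pred I) (F G : I -> {poly int}) :
  (forall i, P i -> eqk k (F i) (G i)) -> eqk k (\prod_(i | P i) F i) (\prod_(i | P i) G i).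
Proof. move=> h; apply: (big_ind2 (eqk k)) => //; first [move=> ? ? ? ? ? ?; exact: eqkM] ; exact: h. Qed.
Lemma eqk_high k d p : (k < d)%N -> eqk k ('X^d * p) 0.
Proof. move=> hd j hj; rewrite coefXnM coef0; case: ifP => //; lia. Qed.

Lemma geom a r : (\sum_(j < r.+1) 'X^(a * j)) * (1 - 'X^a) = 1 - 'X^(a * r.+1) :> {poly int}.
Proof.
elim: r => [|r IH]; first by rewrite big_ord1 muln0 muln1 expr0 mul1r.
rewrite big_ord_recr /= mulrDl IH.
have -> : (a * r.+2 = a * r.+1 + a)%N by lia.
rewrite exprD; ring.
Qed.

Lemma geomw a r : (\sum_(j < r.+1) j%:R * 'X^(a * j)) * (1 - 'X^a)
   = \sum_(j < r.+1) 'X^(a * j) - 1 - r%:R * 'X^(a * r.+1) :> {poly int}.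
Proof.
elim: r => [|r IH]; first by rewrite !big_ord1 muln0 !mul0r expr0; ring.
rewrite big_ord_recr /= mulrDl IH [in RHS]big_ord_recr /=.
have -> : (a * r.+2 = a * r.+1 + a)%N by lia.
rewrite exprD.
ring.
Qed.


Definition G (i j : nat) : {poly int} := if (j == 0)%N || prime i then 'X^(i * j) else 0.
Definition W (i0 i j : nat) : {poly int} := if i == i0 then j%:R * G i j else G i j.
Definition Npoly (r : nat) : {poly int} :=
  \sum_(i0 < r.+1) \prod_(i < r.+1) \sum_(j < r.+1) W i0 i j.

Lemma prodW r (i0 : 'I_r.+1) (m : {ffun 'I_r.+1 -> 'I_r.+1}) :
  \prod_(i < r.+1) W i0 i (m i) = (m i0 : nat)%:R * \prod_(i < r.+1) G i (m i).
Proof.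
rewrite (bigD1 i0) //= [in RHS](bigD1 i0) //= /W eqxx mulrA; congr (_ * _).
apply: eq_bigr => i hi; rewrite val_eqE (negbTE hi) //.
Qed.

Lemma prodG r (m : {ffun 'I_r.+1 -> 'I_r.+1}) :
  \prod_(i < r.+1) G i (m i) =
  if [forall i, ((m i : nat) != 0%N) ==> prime i] then 'X^(\sum_(i < r.+1) i * m i) else 0.
Proof.
case: ifP => h.
  rewrite -prodrXr; apply: eq_bigr => i _.
  by rewrite /G -implyNb (forallP h i).
move/negbT/forallPn: h => [i hi].
rewrite (bigD1 i) //= /G.
have -> : (((m i : nat) == 0%N) || prime i) = false by rewrite -implyNb; apply: negbTE.
by rewrite mul0r.
Qed.

Lemma NpA_coef k : (NpA prime k)%:Z = (Npoly k)`_k.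
Proof.
rewrite /Npoly.
under eq_bigr => i0 _ do rewrite bigA_distr_bigA.
rewrite exchange_big /= coef_sum /NpA -natz natr_sum big_mkcond /=.
apply: eq_bigr => m _.
rewrite (eq_bigr (fun i0 : 'I_k.+1 => (m i0 : nat)%:R * \prod_(i<k.+1) G i (m i))); last by move=> i0 _; exact: prodW.
rewrite -mulr_suml -natr_sum mulr_natl coefMn prodG /is_partA.
case: [forall i, _] => /=; last by rewrite coef0 mul0rn.
rewrite coefXn eq_sym.
by case: eqP => _ /=; [rewrite mulr1n | rewrite mul0rn].
Qed.

Definition Hh (i : nat) : {poly int} := - (if prime i then 'X^i else 0).
Definition Qpoly (r : nat) : {poly int} := \prod_(i < r.+1) (Hh i + 1).

Lemma prodH r (J : {set 'I_r.+1}) :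
  \prod_(i in J) Hh i = (-1) ^+ #|J| *
     (if [forall i in J, prime i] then 'X^(\sum_(i in J) (i : nat)) else 0).
Proof.
rewrite /Hh prodrN; congr (_ * _).
case: ifP => h.
  rewrite -prodrXr; apply: eq_bigr => i hi.
  by move/forallP: h => /(_ i); rewrite hi /= => ->.
move/negbT/forallPn: h => [i]; rewrite negb_imply => /andP[hi hp].
by rewrite (bigD1 i) //= (negbTE hp) mul0r.
Qed.

Lemma card_int (T : finType) (P : pred T) : (#|[set x | P x]|)%:Z = \sum_(x | P x) 1.
Proof. by rewrite sumr_const -natz cardsE. Qed.

Lemma coef_sign n (p : {poly int}) i : ((-1) ^+ n * p)`_i = (-1) ^+ n * p`_i.
Proof. elim: n => [|n IH]; first by rewrite !expr0 !mul1r. by rewrite !exprS -!mulrA !mulN1r coefN IH. Qed.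

Lemma Q_coef m : (qeA prime m)%:Z - (qoA prime m)%:Z = (Qpoly m)`_m.
Proof.
rewrite /Qpoly bigA_distr.
under eq_bigr => J _ do rewrite -big_mkcond prodH.
rewrite coef_sum /qeA /qoA !card_int.
rewrite [in RHS](bigID (fun S : {set 'I_m.+1} => is_dpartA prime S)) /= [X in _ = _ + X]big1; last first.
  move=> J /negbTE; rewrite /is_dpartA.
  case: [forall i in J, _] => /=; last by rewrite mulr0 coef0.
  by move=> h; rewrite coef_sign coefXn eq_sym h mulr0.
rewrite addr0 [in RHS](bigID (fun S : {set 'I_m.+1} => odd #|S|)) /= addrC.
congr (_ + _).
  apply: eq_bigr => J /andP[hP ho]; rewrite coef_sign.
  move: hP; rewrite /is_dpartA => /andP[-> /eqP ->].
  by rewrite coefXn eqxx mulr1 -signr_odd (negbTE ho) expr0.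
rewrite -sumrN; apply: eq_bigr => J /andP[hP ho]; rewrite coef_sign.
move: hP; rewrite /is_dpartA => /andP[-> /eqP ->].
by rewrite coefXn eqxx mulr1 -signr_odd ho expr1.
Qed.

Lemma eqk_sum0 k (I : finType) (P : pred I) (F : I -> {poly int}) :
  (forall i, P i -> eqk k (F i) 0) -> eqk k (\sum_(i | P i) F i) 0.
Proof. move=> h; apply: (eqk_trans (@eqk_sum k I P F (fun _ => 0) h)); rewrite big1 //. Qed.

Lemma G_hi k i j : (k < i * j)%N -> eqk k (G i j) 0.
Proof.
rewrite /G; case: ifP => _ h; last exact: eqk_refl.
rewrite -[X in eqk _ X _]mulr1; exact: eqk_high.
Qed.

Lemma G_hj k i j : (k < j)%N -> eqk k (G i j) 0.
Proof.
move=> h; case hp: (prime i).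
  apply: G_hi; have := prime_gt0 hp; nia.
rewrite /G hp orbF; have -> : (j == 0)%N = false by lia.
exact: eqk_refl.
Qed.

Lemma W_hi k i0 i j : (k < i * j)%N -> eqk k (W i0 i j) 0.
Proof.
move=> h; rewrite /W; case: ifP => _; last exact: G_hi.
rewrite -(mulr0 (j%:R)); apply: eqkM; [exact: eqk_refl | exact: G_hi].
Qed.

Lemma W_hj k i0 i j : (k < j)%N -> eqk k (W i0 i j) 0.
Proof.
move=> h; rewrite /W; case: ifP => _; last exact: G_hj.
rewrite -(mulr0 (j%:R)); apply: eqkM; [exact: eqk_refl | exact: G_hj].
Qed.

Lemma W0 i0 i : W i0 i 0 = if i == i0 then 0 else 1.
Proof. by rewrite /W /G /= muln0 expr0 mul0r. Qed.

Lemma sumW_hi k R i0 i : (k < i)%N -> eqk k (\sum_(j < R.+1) W i0 i j) (W i0 i 0).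
Proof.
move=> h; rewrite big_ord_recl /= -[X in eqk _ _ X]addr0; apply: eqkD; first exact: eqk_refl.
apply: eqk_sum0 => j _; apply: W_hi; rewrite /= /bump /=; nia.
Qed.

Lemma Npoly_step k r : (k <= r)%N -> eqk k (Npoly r.+1) (Npoly r).
Proof.
move=> hk; rewrite /Npoly [X in eqk _ X _]big_ord_recr /= -[X in eqk _ _ X]addr0.
apply: eqkD.
  apply: eqk_sum => i0 _; rewrite big_ord_recr /= -[X in eqk _ _ X]mulr1.
  apply: eqkM.
    apply: eqk_prod => i _; rewrite big_ord_recr /= -[X in eqk _ _ X]addr0.
    apply: eqkD; [exact: eqk_refl | apply: W_hj; lia].
  apply: (eqk_trans (sumW_hi (r.+1) i0 _)); first lia.
  rewrite W0; have -> : (r.+1 == i0)%N = false by have := ltn_ord i0; lia.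
  exact: eqk_refl.
rewrite big_ord_recr /= -[X in eqk _ _ X](mulr0 (\prod_(i < r.+1) \sum_(j < r.+2) W r.+1 i j)).
apply: eqkM; first exact: eqk_refl.
apply: (eqk_trans (sumW_hi (r.+1) (r.+1) _)); first lia.
rewrite W0 eqxx; exact: eqk_refl.
Qed.

Lemma Npoly_range k r : (k <= r)%N -> eqk k (Npoly r) (Npoly k).
Proof.
elim: r => [|r IH] h; first by have -> : k = 0%N by lia; exact: eqk_refl.
case: (ltnP r k) => h2; first by have -> : k = r.+1 by lia; exact: eqk_refl.
exact: eqk_trans (Npoly_step h2) (IH h2).
Qed.

Lemma Qpoly_range k r : (k <= r)%N -> eqk k (Qpoly r) (Qpoly k).
Proof.
elim: r => [|r IH] h; first by have -> : k = 0%N by lia; exact: eqk_refl.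
case: (ltnP r k) => h2; first by have -> : k = r.+1 by lia; exact: eqk_refl.
apply: eqk_trans _ (IH h2).
rewrite /Qpoly big_ord_recr /= -[X in eqk _ _ X]mulr1; apply: eqkM; first exact: eqk_refl.
rewrite -[X in eqk _ _ X]add0r; apply: eqkD; last exact: eqk_refl.
rewrite /Hh; case: ifP => _; last by rewrite oppr0; exact: eqk_refl.
rewrite -mulrN1; apply: eqk_high; lia.
Qed.

Definition cc (n i0 i : nat) : {poly int} :=
  if i == i0 then (if prime i then \sum_(j < n.+1) 'X^(i * j) - 1 else 0) else 1.

Lemma factor_eq n i0 i : eqk n ((\sum_(j < n.+1) W i0 i j) * (Hh i + 1)) (cc n i0 i).
Proof.
rewrite /cc /W /Hh; case: (i =P i0) => [_|_]; case hp: (prime i).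
- rewrite (eq_bigr (fun j : 'I_n.+1 => (j:nat)%:R * 'X^(i * j))); last by move=> j _; rewrite /G hp orbT.
  rewrite (addrC (- _) 1) geomw -[X in eqk _ _ X]addr0; apply: eqkD; first exact: eqk_refl.
  rewrite -mulNr mulrC; apply: eqk_high; have := prime_gt0 hp; nia.
- rewrite big1 ?mul0r; first exact: eqk_refl.
  move=> j _; rewrite /G hp orbF; case: eqP => [->|]; by rewrite ?mul0r ?mulr0.
- rewrite (eq_bigr (fun j : 'I_n.+1 => 'X^(i * j))); last by move=> j _; rewrite /G hp orbT.
  rewrite (addrC (- _) 1) geom -[X in eqk _ _ X]addr0; apply: eqkD; first exact: eqk_refl.
  rewrite -mulrN1; apply: eqk_high; have := prime_gt0 hp; nia.
- rewrite oppr0 add0r mulr1 big_ord_recl big1 ?addr0 /G hp /= ?muln0 ?expr0; first exact: eqk_refl.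
  by [].

Qed.

Lemma sum_div a n : (0 < a)%N -> (0 < n)%N ->
  \sum_(j < n.+1) (((n == a * j)%N)%:R : int) = ((a %| n)%N : nat)%:R.
Proof.
move=> ha hn; case: (boolP (a %| n)%N) => h.
  have hq : (n %/ a < n.+1)%N by rewrite ltnS leq_div.
  rewrite (bigD1 (Ordinal hq)) //= big1 ?addr0.
    by rewrite mulnC divnK // eqxx.
  move=> j hj; case: eqP => // e; move/eqP: hj; case; apply: val_inj => /=.
  by apply/eqP; rewrite eq_sym -(eqn_pmul2l ha) -e mulnC divnK.
rewrite big1 // => j _; case: eqP => // e; move/negP: h; case; apply/dvdnP; exists j; by rewrite mulnC -e.
Qed.

Lemma sum_primes n : (0 < n)%N ->
  \sum_(i < n.+1) (((prime i && (i %| n)%N) : nat)%:R : int) = (size (primes n))%:R.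
Proof.
move=> hn.
have -> : \sum_(i < n.+1) (((prime i && (i %| n)%N) : nat)%:R : int)
   = (\sum_(i < n.+1) ((i : nat) \in primes n : nat))%:R.
  by rewrite natr_sum; apply: eq_bigr => i _; rewrite mem_primes hn.
congr (_%:R).
transitivity (count (mem (primes n)) (iota 0 n.+1)).
  rewrite -(big_mkord xpredT (fun i => nat_of_bool (i \in primes n))).
  rewrite /index_iota subn0 -sum1_count [in RHS]big_mkcond /=.
  by apply: eq_bigr => i _; case: (i \in primes n).
rewrite -size_filter; apply/perm_size/uniq_perm.
- by rewrite filter_uniq // iota_uniq.
- exact: primes_uniq.
move=> x; rewrite mem_filter mem_iota /=; apply/andP/idP => [[]//|h]; split=> //.
move: h; rewrite mem_primes => /and3P[_ _ d]; have := dvdn_leq hn d; lia.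
Qed.

Lemma main_coef n : (0 < n)%N -> (Npoly n * Qpoly n)`_n = (size (primes n))%:R.
Proof.
move=> hn.
have E : eqk n (Npoly n * Qpoly n) (\sum_(i0 < n.+1) cc n i0 i0).
  rewrite /Npoly /Qpoly mulr_suml; apply: eqk_sum => i0 _; rewrite -big_split /=.
  apply: (@eqk_trans n _ (\prod_(i < n.+1) cc n i0 i)).
    apply: eqk_prod => i _; exact: factor_eq.
  rewrite (bigD1 i0) //= big1 ?mulr1; first exact: eqk_refl.
  by move=> i hi; rewrite /cc val_eqE (negbTE hi).
rewrite E // coef_sum -sum_primes //; apply: eq_bigr => i0 _.
rewrite /cc eqxx; case hp: (prime i0) => /=; last by rewrite coef0.
rewrite coefB coef_sum coef1; have -> : (n == 0%N) = false by lia.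
rewrite subr0; under eq_bigr => j _ do rewrite coefXn.
by rewrite sum_div // prime_gt0.
Qed.

Lemma NpA0 : NpA prime 0 = 0%N.
Proof. by rewrite /NpA big1 // => m _; rewrite big1 // => i _; rewrite (ord1 (m i)). Qed.

Theorem corollary6 (n : nat) (hn : (0 < n)%N) :
  \sum_(1 <= k < n.+1)
     (NpA prime k)%:Z * ((qeA prime (n - k))%:Z - (qoA prime (n - k))%:Z)
  = (size (primes n))%:Z.
Proof.
rewrite -natz -main_coef // coefM -(big_mkord xpredT (fun j => (Npoly n)`_j * (Qpoly n)`_(n - j))).
rewrite [in RHS]big_ltn // (Npoly_range (leq0n n) (leqnn 0)) -NpA_coef NpA0 mul0r add0r.
apply: eq_big_nat => k /andP[h1 h2].
rewrite (Npoly_range (k:=k) (r:=n) _ (leqnn k)); last lia.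
rewrite (Qpoly_range (k:=n-k) (r:=n) (leq_subr k n) (leqnn _)).
by rewrite -NpA_coef -Q_coef.
Qed.
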